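(* Let $X=\sum_{p,q\ge0}x_{p,q}a^pb^q\in\tilde{\mathcal{A}}_{conv.}$ with $x_{0,0}=1$. Then $X$ is invertible in the algebra $\tilde{\mathcal{A}}_{conv.}$.
   Context: Let $\mathcal{A}_0$ be the $\mathbb{C}$-algebra of polynomials in $a,b$ subject to $ab-ba=b^2$, and $\widehat{\mathcal{A}}$ its completion for the $(a,b)$-adic topology, i.e. the algebra of formal power series $\sum_{p,q\ge0}\gamma_{p,q}a^pb^q$ with product extending that of $\mathcal{A}_0$. $\tilde{\mathcal{A}}_{conv.}\subset\widehat{\mathcal{A}}$ is the subalgebra of those series for which there exist $R>1$, $C_R>0$ with $|\gamma_{p,q}|\le C_RR^{p+q}q!$ for all $p,q\in\mathbb{N}$. *)

(* Defs.v *)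
From HB Require Import structures.
From mathcomp Require Import all_boot all_order all_algebra.
From mathcomp Require Import complex.
From mathcomp Require Import reals.
Set Implicit Arguments. Unset Strict Implicit. Unset Printing Implicit Defensive.
Import Order.TTheory GRing.Theory Num.Theory.
Local Open Scope ring_scope.
Local Open Scope complex_scope.

(* A formal series  sum_{p,q} X p q a^p b^q  in normally ordered monomials
   (a's on the left, b's on the right) of the completion \hat A of
   A_0 = C<a,b>/(ab - ba = b^2). *)
Definition aseries (R : realType) := nat -> nat -> R[i].

Definition rising (q k : nat) : nat := \prod_(i < k) (q + i).

(* Commutation rule in A_0: since [a,b] = b^2, ad_a(b^q) = q b^(q+1), hence
     b^q a^r = \sum_k (-1)^k 'C(r,k) q(q+1)...(q+k-1) a^(r-k) b^(q+k).
   Therefore  (a^p b^q)(a^r b^s) = \sum_k (-1)^k 'C(r,k) rising q k a^(p+r-k) b^(q+s+k).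
   The coefficient of a^m b^n in X*Y collects the terms with p + r - k = m and
   q + s + k = n, i.e. p <= m, q <= n, k <= n - q, r = m - p + k, s = n - q - k
   (a finite sum, so the product is well defined on the completion). *)
Definition amul (R : realType) (X Y : aseries R) : aseries R :=
  fun m n =>
    \sum_(p < m.+1) \sum_(q < n.+1) \sum_(k < (n - q).+1)
      ((-1) ^+ k * ('C(m - p + k, k) * rising q k)%:R
        * X p q * Y (m - p + k)%N (n - q - k)%N).

Definition aone (R : realType) : aseries R :=
  fun p q => if (p == 0%N) && (q == 0%N) then 1 else 0.

Definition aconv (R : realType) (X : aseries R) : Prop :=
  exists (R0 C : R), 1 < R0 /\ 0 < C /\
    forall p q : nat, `|X p q| <= ((C * R0 ^+ (p + q) * (q`!)%:R)%:C).

Definition ainvertible_conv (R : realType) (X : aseries R) : Prop :=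
  exists Y : aseries R, aconv Y /\ amul X Y = aone R /\ amul Y X = aone R.

(* Main.v *)
Require Import Defs.
From HB Require Import structures.
From mathcomp Require Import all_boot all_order all_algebra.
From mathcomp Require Import complex.
From mathcomp Require Import reals.
From mathcomp Require Import ring lra zify.
From Stdlib Require Import FunctionalExtensionality.
Import Order.TTheory GRing.Theory Num.Theory.
Local Open Scope ring_scope.
Local Open Scope complex_scope.
Set Implicit Arguments. Unset Strict Implicit. Unset Printing Implicit Defensive.

Lemma rising0 q : rising q 0 = 1%N.
Proof. by rewrite /rising big_ord0. Qed.

Lemma risingS q k : rising q k.+1 = (rising q k * (q + k))%N.
Proof. by rewrite /rising big_ord_recr. Qed.

Lemma risingSl q k : rising q k.+1 = (q * rising q.+1 k)%N.
Proof.
rewrite /rising big_ord_recl addn0; congr (_ * _)%N.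
by apply: eq_bigr => i _; rewrite lift0 addSnnS.
Qed.

Lemma rising_add x i j : rising x (i + j) = (rising x i * rising (x + i) j)%N.
Proof.
elim: j => [|j IH]; first by rewrite addn0 rising0 muln1.
by rewrite addnS !risingS IH addnA mulnA.
Qed.

Lemma rising0k k : rising 0 k.+1 = 0%N.
Proof. by rewrite risingSl. Qed.

Lemma rising1 n : rising 1 n = n`!.
Proof. elim: n => [|n IH]; first by rewrite rising0. 
by rewrite risingS IH factS mulnC add1n. Qed.

Lemma bin_rising a k : ('C(a + k, k) * k`! = rising a.+1 k)%N.
Proof.
elim: k => [|k IH]; first by rewrite bin0 rising0.
rewrite risingS -IH factS mulnA addnS.
have := mul_bin_diag (a + k).+1 k; rewrite /= => H.
rewrite [in LHS](mulnC _ k.+1) -H addSn; ring.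
Qed.

Lemma leq_rising x y k : (x <= y)%N -> (rising x k <= rising y k)%N.
Proof. by move=> h; apply: leq_prod => i _; rewrite leq_add2r. Qed.

Definition rc (K : comNzRingType) (w : K) (p : nat) : K := \prod_(i < p) (w + i%:R).

Lemma rc0 (K : comNzRingType) (w : K) : rc w 0 = 1.
Proof. by rewrite /rc big_ord0. Qed.

Lemma rcS (K : comNzRingType) (w : K) p : rc w p.+1 = rc w p * (w + p%:R).
Proof. by rewrite /rc big_ord_recr. Qed.

Lemma rcSl (K : comNzRingType) (w : K) p : rc w p.+1 = w * rc (w + 1) p.
Proof.
rewrite /rc big_ord_recl /= addr0; congr (_ * _).
by apply: eq_bigr => i _; rewrite /bump /= add1n -nat1r addrA.
Qed.

Lemma rc_add (K : comNzRingType) (w : K) a b : rc w (a + b) = rc w a * rc (w + a%:R) b.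
Proof.
elim: b => [|b IH]; first by rewrite addn0 rc0 mulr1.
by rewrite addnS !rcS IH natrD addrA mulrA.
Qed.

Lemma rc_ident (K : comNzRingType) q r (w : K) :
  \sum_(k < r.+1) (-1) ^+ k * ('C(r, k) * rising q k)%:R * rc (w + (q + k)%:R) (r - k)
  = rc w r.
Proof.
elim: r w => [|r IH] w.
  by rewrite big_ord1 expr0 bin0 rising0 mul1r mul1r rc0 rc0.
rewrite big_ord_recl.
under eq_bigr => j _ do rewrite lift0 binS mulnDl natrD mulrDr mulrDl.
rewrite big_split /= addrA.
set A := (X in X + _ = _).
have -> : A = \sum_(k < r.+1) (-1) ^+ k * ('C(r, k) * rising q k)%:R * rc (w + (q + k)%:R) (r.+1 - k).
  transitivity (\sum_(k < r.+2) (-1) ^+ k * ('C(r, k) * rising q k)%:R * rc (w + (q + k)%:R) (r.+1 - k)).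
    rewrite [RHS]big_ord_recl /A; congr (_ + _).
    by rewrite /= !bin0.
  by rewrite big_ord_recr /= bin_small // mul0n mulr0 mul0r addr0.
rewrite -big_split /= rcSl -IH mulr_sumr; apply: eq_bigr => k _.
have hk : (k <= r)%N by rewrite -ltnS.
rewrite subSn // rcSl risingS exprS !natrM.
rewrite ?addnS -natr1 addrA (addrAC w 1); ring.
Qed.

Lemma sum_rev (V : nmodType) n (F : nat -> V) :
  \sum_(i < n) F i = \sum_(i < n) F (n - i.+1)%N.
Proof. by rewrite (reindex_inj rev_ord_inj). Qed.

Lemma antidiag_rev (V : nmodType) N (F : nat -> nat -> V) :
  \sum_(i < N.+1) F i (N - i)%N = \sum_(i < N.+1) F (N - i)%N i.
Proof.
rewrite (sum_rev _ (fun i => F i (N - i)%N)); apply: eq_bigr => i _.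
have hi : (i <= N)%N by rewrite -ltnS.
by rewrite subSS subKn.
Qed.

Lemma tri_rec (V : nmodType) (F : nat -> nat -> V) M :
  \sum_(i < M.+2) \sum_(j < (M.+1 - i).+1) F i j =
  \sum_(i < M.+1) \sum_(j < (M - i).+1) F i j + \sum_(i < M.+2) F i (M.+1 - i)%N.
Proof.
rewrite big_ord_recr /= subnn big_ord1.
rewrite [X in _ = _ + X]big_ord_recr /= subnn addrA; congr (_ + _).
rewrite -big_split /=; apply: eq_bigr => i _.
have hi : (i <= M)%N by rewrite -ltnS.
by rewrite (subSn hi) big_ord_recr.
Qed.

Lemma tri_swap (V : nmodType) (F : nat -> nat -> V) M :
  \sum_(i < M.+1) \sum_(j < (M - i).+1) F i j =
  \sum_(j < M.+1) \sum_(i < (M - j).+1) F i j.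
Proof.
elim: M => [|M IH]; first by rewrite !big_ord1.
rewrite tri_rec (tri_rec (fun j i => F i j)) IH; congr (_ + _).
exact: antidiag_rev.
Qed.

Lemma diag_sum (V : nmodType) (F : nat -> nat -> V) M :
  \sum_(i < M.+1) \sum_(j < (M - i).+1) F i j =
  \sum_(r < M.+1) \sum_(k < r.+1) F (r - k)%N k.
Proof.
elim: M => [|M IH]; first by rewrite !big_ord1.
rewrite tri_rec IH [RHS]big_ord_recr /=; congr (_ + _).
exact: antidiag_rev.
Qed.

Definition rho (R : realType) (X : aseries R) (z : complex R) (d : nat) : complex R :=
  \sum_(p < d.+1) X p (d - p)%N * rc (z + (d - p)%:R) p.

Definition comp (R : realType) (A B : complex R -> nat -> complex R) (z : complex R) (d : nat)
  : complex R := \sum_(e < d.+1) B z e * A (z + e%:R) (d - e)%N.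

Definition idop (R : realType) (z : complex R) (d : nat) : complex R :=
  if d == 0%N then 1 else 0.

Lemma comp_assoc (R : realType) (A B C : complex R -> nat -> complex R) z d :
  comp (comp A B) C z d = comp A (comp B C) z d.
Proof.
rewrite /comp /=.
under [RHS]eq_bigr => g _ do rewrite mulr_suml.
under eq_bigr => e _ do rewrite mulr_sumr.
pose F := fun f e => C z e * B (z + e%:R) f * A (z + e%:R + f%:R) (d - e - f)%N.
transitivity (\sum_(e < d.+1) \sum_(f < (d - e).+1) F f e).
  by apply: eq_bigr => e _; apply: eq_bigr => f _; rewrite /F mulrA.
rewrite -tri_swap diag_sum; apply: eq_bigr => g _; apply: eq_bigr => e _.
have he : (e <= g)%N by rewrite -ltnS.
rewrite /F -addrA -natrD subnKC // -subnDA subnKC //.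
Qed.

Lemma comp_id_r (R : realType) (A : complex R -> nat -> complex R) z d :
  comp A (@idop R) z d = A z d.
Proof.
rewrite /comp big_ord_recl /= /idop eqxx mul1r addr0 subn0.
by rewrite big1 ?addr0 // => i _; rewrite mul0r.
Qed.

Lemma comp_id_l (R : realType) (A : complex R -> nat -> complex R) z d :
  comp (@idop R) A z d = A z d.
Proof.
rewrite /comp big_ord_recr /= /idop subnn eqxx mulr1.
rewrite big1 ?add0r // => i _.
have hi : (i < d)%N := ltn_ord i.
by rewrite subn_eq0 leqNgt hi mulr0.
Qed.

Lemma rc_zero (K : comNzRingType) (w : K) p i : (i < p)%N -> w + i%:R = 0 -> rc w p = 0.
Proof.
move=> hi hw; rewrite /rc (bigD1 (Ordinal hi)) //= hw mul0r //.
Qed.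

Lemma rc1_neq0 (R : realType) j : rc (1 : complex R) j != 0.
Proof.
rewrite /rc; apply/prodf_neq0 => i _.
by rewrite nat1r pnatr_eq0.
Qed.

Lemma rho_inj (R : realType) (X Y : aseries R) :
  (forall z d, rho X z d = rho Y z d) -> X = Y.
Proof.
move=> H; apply: functional_extensionality => m; apply: functional_extensionality => n.
set d := (m + n)%N.
pose x p := X p (d - p)%N - Y p (d - p)%N.
have H0 : forall z, \sum_(p < d.+1) x p * rc (z + (d - p)%:R) p = 0.
  move=> z; have := H z d; rewrite /rho => e.
  under eq_bigr => p _ do rewrite /x mulrBl.
  by rewrite sumrB e subrr.
have key : forall j, (j <= d)%N -> x j = 0.
  elim/ltn_ind => j IH hj.
  have := H0 ((j.+1)%:R - d%:R).
  have hjd : (j < d.+1)%N by rewrite ltnS.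
  rewrite (bigD1 (Ordinal hjd)) //= big1 ?addr0.
    have -> : (j.+1)%:R - d%:R + (d - j)%:R = 1 :> complex R.
      by rewrite natrB //; ring.
    by move/eqP; rewrite mulf_eq0 (negbTE (rc1_neq0 _ _)) orbF => /eqP.
  move=> p hp.
  have hpd : (p <= d)%N by rewrite -ltnS.
  have hpj : (p : nat) != j by apply: contra hp => /eqP h; apply/eqP; apply: val_inj.
  case: (ltngtP p j) => [hlt|hgt|heq]; last by rewrite heq eqxx in hpj.
    by rewrite IH ?mul0r // (leq_trans (ltnW hlt)) // -ltnS.
  rewrite (@rc_zero _ _ p (p.-1 - j)%N); first by rewrite mulr0.
    by rewrite ltn_subLR; lia.
  have e1 : ((d - p) + (p.-1 - j) + j.+1 = d)%N by lia.
  have e2 : d%:R = ((d - p) + (p.-1 - j))%:R + (j.+1)%:R :> complex R by rewrite -natrD e1.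
  rewrite -addrA -natrD e2; ring.
have := key m (leq_addr n m).
by rewrite /x /d addKn => /eqP; rewrite subr_eq0 => /eqP.
Qed.

Lemma reindex_R (V : nmodType) d (h : nat -> nat -> nat -> V) :
  \sum_(e < d.+1) \sum_(r < e.+1) \sum_(p < (d - e).+1) h e r p =
  \sum_(p < d.+1) \sum_(q < (d - p).+1) \sum_(r < (d - p - q).+1) h (d - p - q)%N r p.
Proof.
under eq_bigr => e _ do rewrite exchange_big /=.
rewrite (tri_swap (fun e p => \sum_(r < e.+1) h e r p)).
apply: eq_bigr => p _.
rewrite (sum_rev _ (fun e => \sum_(r < e.+1) h e r p)).
by apply: eq_bigr => q _; rewrite subSS.
Qed.

Lemma reindex_L (V : nmodType) d (g : nat -> nat -> nat -> nat -> V) :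
  \sum_(m < d.+1) \sum_(p < m.+1) \sum_(q < (d - m).+1) \sum_(k < (d - m - q).+1) g m p q k
  = \sum_(p < d.+1) \sum_(q < (d - p).+1) \sum_(r < (d - p - q).+1) \sum_(k < r.+1)
      g (p + r - k)%N p q k.
Proof.
pose G := fun m p => \sum_(q < (d - m).+1) \sum_(k < (d - m - q).+1) g m p q k.
transitivity (\sum_(m < d.+1) \sum_(p < m.+1) (fun i j => G (i + j)%N j) (m - p)%N p).
  apply: eq_bigr => m _; apply: eq_bigr => p _.
  have hp : (p <= m)%N by rewrite -ltnS.
  by rewrite /= subnK.
rewrite -(diag_sum (fun i j => G (i + j)%N j)).
rewrite (tri_swap (fun i j => G (i + j)%N j)).
apply: eq_bigr => p _.
have hp : (p <= d)%N by rewrite -ltnS.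
rewrite /G.
under eq_bigr => i _ do rewrite (addnC i p) subnDA.
rewrite (tri_swap (fun i q => \sum_(k < (d - p - i - q).+1) g (p + i)%N p q k)).
apply: eq_bigr => q _.
under eq_bigr => i _ do rewrite subnAC.
rewrite (diag_sum (fun i k => g (p + i)%N p q k)).
apply: eq_bigr => r _; apply: eq_bigr => k _.
have hk : (k <= r)%N by rewrite -ltnS.
by rewrite addnBA.
Qed.

Lemma rho_aone (R : realType) z d : rho (aone R) z d = idop z d.
Proof.
rewrite /rho /idop /aone; case: d => [|d].
  by rewrite big_ord1 /= rc0 mulr1.
rewrite big1 // => p _.
case: (p =P 0%N :> nat) => [->|hp] /=; first by rewrite subn0 mul0r.
by rewrite mul0r.
Qed.

Lemma rho_amul (R : realType) (X Y : aseries R) z d :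
  rho (amul X Y) z d = comp (rho X) (rho Y) z d.
Proof.
pose T := \sum_(p < d.+1) \sum_(q < (d - p).+1) \sum_(r < (d - p - q).+1)
   X p q * Y r (d - p - q - r)%N * rc (z + (d - p - q - r)%:R) r * rc (z + (d - p)%:R) p.
transitivity T.
  pose g := fun m p q k => (-1) ^+ k * ('C(m - p + k, k) * rising q k)%:R * X p q *
     Y (m - p + k)%N (d - m - q - k)%N * rc (z + (d - m)%:R) m.
  transitivity (\sum_(m < d.+1) \sum_(p < m.+1) \sum_(q < (d - m).+1)
                 \sum_(k < (d - m - q).+1) g m p q k).
    rewrite /rho /amul; apply: eq_bigr => m _; rewrite mulr_suml; apply: eq_bigr => p _.
    rewrite mulr_suml; apply: eq_bigr => q _; rewrite mulr_suml.
    by apply: eq_bigr => k _.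
  rewrite reindex_L; apply: eq_bigr => p hp; apply: eq_bigr => q hq; apply: eq_bigr => r hr.
  have hp' : (p <= d)%N by rewrite -ltnS.
  have hq' : (q <= d - p)%N by rewrite -ltnS.
  have hr' : (r <= d - p - q)%N by rewrite -ltnS.
  set s := (d - p - q - r)%N.
  transitivity (\sum_(k < r.+1) ((-1) ^+ k * ('C(r, k) * rising q k)%:R *
      rc (z + s%:R + (q + k)%:R) (r - k)) * (X p q * Y r s * rc (z + (d - p)%:R) p)).
    apply: eq_bigr => k _.
    have hk : (k <= r)%N by rewrite -ltnS.
    have e1 : (p + r - k - p + k = r)%N by lia.
    have e2 : (d - (p + r - k) - q - k = s)%N by rewrite /s; lia.
    have e3 : (d - (p + r - k) = s + (q + k))%N by rewrite /s; lia.
    have e4 : (p + r - k = (r - k) + p)%N by lia.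
    have e5 : (s + (q + k) + (r - k) = d - p)%N by rewrite /s; lia.
    rewrite /g e1 e2 e3 e4 rc_add -addrA -natrD e5 natrD addrA; ring.
  by rewrite -mulr_suml rc_ident; ring.
rewrite /comp /rho.
pose h := fun e r p => Y r (e - r)%N * rc (z + (e - r)%:R) r *
   (X p (d - e - p)%N * rc (z + e%:R + (d - e - p)%:R) p).
transitivity (\sum_(e < d.+1) \sum_(r < e.+1) \sum_(p < (d - e).+1) h e r p); last first.
  apply: eq_bigr => e _; rewrite mulr_suml; apply: eq_bigr => r _.
  by rewrite mulr_sumr.
rewrite reindex_R; apply: eq_bigr => p hp; apply: eq_bigr => q hq; apply: eq_bigr => r hr.
have hp' : (p <= d)%N by rewrite -ltnS.
have hq' : (q <= d - p)%N by rewrite -ltnS.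
have hr' : (r <= d - p - q)%N by rewrite -ltnS.
have e1 : (d - (d - p - q) - p = q)%N by lia.
have e2 : (d - p - q - r = d - p - q - r)%N by [].
rewrite /h e1 -addrA -natrD subnK //; ring.
Qed.

Definition blk (R : realType) (X Y : aseries R) (m n p q : nat) : complex R :=
  \sum_(k < (n - q).+1) (-1) ^+ k * ('C(m - p + k, k) * rising q k)%:R * X p q *
     Y (m - p + k)%N (n - q - k)%N.

Lemma amul_split (R : realType) (X Y : aseries R) m n :
  amul X Y m n = X 0%N 0%N * Y m n +
   \sum_(p < m.+1) \sum_(q < n.+1) (if ((p : nat) == 0%N) && ((q : nat) == 0%N) then 0 else blk X Y m n p q).
Proof.
have -> : amul X Y m n = \sum_(p < m.+1) \sum_(q < n.+1) blk X Y m n p q by [].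
transitivity (\sum_(p < m.+1) \sum_(q < n.+1)
   ((if ((p : nat) == 0%N) && ((q : nat) == 0%N) then blk X Y m n p q else 0) +
    (if ((p : nat) == 0%N) && ((q : nat) == 0%N) then 0 else blk X Y m n p q))).
  apply: eq_bigr => p _; apply: eq_bigr => q _.
  by case: ifP; rewrite ?addr0 ?add0r.
under eq_bigr => p _ do rewrite big_split /=.
rewrite big_split /=; congr (_ + _).
rewrite big_ord_recl /= big_ord_recl /= big1; last by move=> i _.
rewrite big1; last by move=> i _; rewrite big1.
rewrite !addr0 /blk big_ord_recl /= big1.
  by rewrite addr0 expr0 !subn0 !addn0 bin0 rising0 mul1r mul1r.
by move=> k _; rewrite /bump /= add1n rising0k muln0 mulr0 mul0r mul0r.
Qed.

Fixpoint yf (R : realType) (X : aseries R) (f m n : nat) : complex R :=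
  if f is f'.+1 then aone R m n -
    \sum_(p < m.+1) \sum_(q < n.+1)
       (if ((p : nat) == 0%N) && ((q : nat) == 0%N) then 0 else blk X (yf X f') m n p q)
  else 0.

Lemma yf_stab (R : realType) (X : aseries R) f m n :
  (m + n < f)%N -> yf X f m n = yf X (m + n).+1 m n.
Proof.
elim/ltn_ind: f m n => f IH m n hf.
case: f IH hf => [|f] IH hf //=.
congr (_ - _); apply: eq_bigr => p hp; apply: eq_bigr => q hq.
case: ifP => // hpq; rewrite /blk; apply: eq_bigr => k hk.
have hp' : (p <= m)%N by rewrite -ltnS.
have hq' : (q <= n)%N by rewrite -ltnS.
have hk' : (k <= n - q)%N by rewrite -ltnS.
have hpq' : (0 < p + q)%N.
  by move: hpq; case: (p : nat) => [|?]; case: (q : nat) => [|?].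
have hlt : (m - p + k + (n - q - k) < m + n)%N by lia.
rewrite (IH f) //; last by lia.
rewrite (IH (m + n)%N) //; lia.
Qed.

Lemma rinv_exists (R : realType) (X : aseries R) :
  X 0%N 0%N = 1 -> exists Y, amul X Y = aone R.
Proof.
move=> hX; exists (fun m n => yf X (m + n).+1 m n).
apply: functional_extensionality => m; apply: functional_extensionality => n.
rewrite amul_split hX mul1r /=.
set S1 := (X in _ - X + _). set S2 := (X in _ + X).
suff -> : S1 = S2 by rewrite subrK.
apply: eq_bigr => p hp; apply: eq_bigr => q hq.
case: ifP => // hpq; rewrite /blk; apply: eq_bigr => k hk.
have hp' : (p <= m)%N by rewrite -ltnS.
have hq' : (q <= n)%N by rewrite -ltnS.
have hk' : (k <= n - q)%N by rewrite -ltnS.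
have hpq' : (0 < p + q)%N.
  by move: hpq; case: (p : nat) => [|?]; case: (q : nat) => [|?].
by rewrite yf_stab //; lia.
Qed.

Lemma rho_amulF (R : realType) (X Y : aseries R) :
  rho (amul X Y) = comp (rho X) (rho Y).
Proof.
apply: functional_extensionality => z; apply: functional_extensionality => d.
exact: rho_amul.
Qed.

Lemma rho_aoneF (R : realType) : rho (aone R) = @idop R.
Proof.
apply: functional_extensionality => z; apply: functional_extensionality => d.
exact: rho_aone.
Qed.

Lemma amul00 (R : realType) (X Y : aseries R) : amul X Y 0%N 0%N = X 0%N 0%N * Y 0%N 0%N.
Proof.
rewrite amul_split big_ord1 big_ord1 /= addr0 //.
Qed.

Lemma two_sided (R : realType) (X Y : aseries R) :
  X 0%N 0%N = 1 -> amul X Y = aone R -> amul Y X = aone R.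
Proof.
move=> hX hXY.
have hY : Y 0%N 0%N = 1.
  by have := amul00 X Y; rewrite hXY hX mul1r /aone /= => <-.
have [W hYW] := rinv_exists hY.
have e1 : comp (rho X) (rho Y) = @idop R by rewrite -rho_amulF hXY rho_aoneF.
have e2 : comp (rho Y) (rho W) = @idop R by rewrite -rho_amulF hYW rho_aoneF.
have e3 : rho X = rho W.
  transitivity (comp (rho X) (@idop R)).
    by apply: functional_extensionality => z; apply: functional_extensionality => d; rewrite comp_id_r.
  rewrite -e2.
  transitivity (comp (comp (rho X) (rho Y)) (rho W)).
    by apply: functional_extensionality => z; apply: functional_extensionality => d; rewrite comp_assoc.
  rewrite e1.
  by apply: functional_extensionality => z; apply: functional_extensionality => d; rewrite comp_id_l.
apply: rho_inj => z d.
by rewrite rho_amul e3 e2 rho_aone.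
Qed.

Lemma hockey q b :
  (\sum_(k < b.+1) rising q k * rising k.+1 (b - k) = rising q.+1 b)%N.
Proof.
elim: b => [|b IH]; first by rewrite big_ord1 /= !rising0.
rewrite big_ord_recr /= subnn rising0 muln1.
transitivity ((\sum_(k < b.+1) rising q k * rising k.+1 (b - k)) * b.+1 + rising q b.+1)%N.
  congr (_ + _)%N; rewrite big_distrl /=; apply: eq_bigr => k _.
  have hk : (k <= b)%N by rewrite -ltnS.
  by rewrite subSn // risingS addSn subnKC // mulnA.
by rewrite IH (risingS q.+1 b) (risingSl q b); ring.
Qed.

Lemma Tsum a b q :
  ((\sum_(k < b.+1) 'C(a + k, k) * rising q k * rising (a + k).+1 (b - k)) * b`!
   = rising a.+1 b * rising q.+1 b)%N.
Proof.
rewrite -(hockey q b) big_distrl big_distrr /=; apply: eq_bigr => k _.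
have hk : (k <= b)%N by rewrite -ltnS.
have e1 : b`! = (k`! * rising k.+1 (b - k))%N.
  by rewrite -!rising1 -rising_add subnKC // add1n.
have e2 : rising a.+1 b = (rising a.+1 k * rising (a + k).+1 (b - k))%N.
  by rewrite -addSn -rising_add subnKC.
rewrite e1 e2 -(bin_rising a k); ring.
Qed.

Lemma Lbound a b p q :
  ((\sum_(k < b.+1) 'C(a + k, k) * rising q k * rising (a + k).+1 (b - k)) * q`!
   <= rising (a + p).+1 (b + q))%N.
Proof.
set T := (\sum_(k < b.+1) _)%N.
have hb : (0 < b`!)%N := fact_gt0 b.
have e : (T * q`! * b`! = rising a.+1 b * rising b.+1 q * b`!)%N.
  rewrite mulnAC Tsum -mulnA.
  have -> : (rising q.+1 b * q`! = b`! * rising b.+1 q)%N.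
    by rewrite -!rising1 mulnC -[q.+1]add1n -rising_add -[b.+1]add1n -rising_add addnC.
  ring.
have e' : (T * q`! = rising a.+1 b * rising b.+1 q)%N.
  by apply/eqP; rewrite -(eqn_pmul2r hb); apply/eqP.
rewrite e'.
apply: (@leq_trans (rising a.+1 (b + q))).
  rewrite rising_add leq_mul2l; apply/orP; right.
  by apply: leq_rising; rewrite addSn ltnS leq_addl.
by apply: leq_rising; rewrite ltnS leq_addr.
Qed.

Lemma blk_bound (R : realType) (X Y : aseries R) (C R0 S : R) m n p q :
  0 <= C -> 0 <= R0 -> 0 <= S -> (p <= m)%N -> (q <= n)%N ->
  (forall p q, `|X p q| <= (C * R0 ^+ (p + q) * (q`!)%:R)%:C) ->
  (forall a b, (a + b = m + n - (p + q))%N ->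
      `|Y a b| <= (S ^+ (a + b) * (rising a.+1 b)%:R)%:C) ->
  `|blk X Y m n p q| <=
     (C * R0 ^+ (p + q) * S ^+ (m + n - (p + q)) * (rising m.+1 n)%:R)%:C.
Proof.
move=> hC hR hS hp hq hX hY.
rewrite /blk.
apply: le_trans (ler_norm_sum _ _ _) _.
set K := C * R0 ^+ (p + q) * S ^+ (m + n - (p + q)).
have hK : 0 <= K by rewrite /K !mulr_ge0 // exprn_ge0.
apply: (@le_trans _ _ (\sum_(k < (n - q).+1)
   (('C(m - p + k, k) * rising q k * rising (m - p + k).+1 (n - q - k) * q`!)%:R * K)%:C)).
  apply: ler_sum => k _.
  rewrite !normrM normrX normrN1 expr1n mul1r normr_nat.
  have hk : (k <= n - q)%N by rewrite -ltnS.
  have eab : ((m - p + k) + (n - q - k) = m + n - (p + q))%N by lia.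
  have h1 := hY (m - p + k)%N (n - q - k)%N eab.
  have h2 := hX p q.
  have -> : (('C(m - p + k, k) * rising q k * rising (m - p + k).+1 (n - q - k) * q`!)%:R * K)%:C
     = ('C(m - p + k, k) * rising q k)%:R * (C * R0 ^+ (p + q) * (q`!)%:R)%:C *
       (S ^+ (m - p + k + (n - q - k)) * (rising (m - p + k).+1 (n - q - k))%:R)%:C.
    rewrite -(rmorph_nat (real_complex R)) -!rmorphM; congr (_%:C).
    by rewrite eab /K !natrM; ring.
  apply: ler_pM => //.
  - by rewrite mulr_ge0 // ler0n.
  - by apply: ler_pM => //; rewrite ?ler0n.
rewrite -rmorph_sum lecR -mulr_suml -natr_sum -big_distrl /=.
rewrite [X in _ <= X]mulrC ler_wpM2r // ler_nat.
have := Lbound (m - p) (n - q) p q.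
by rewrite !subnK.
Qed.

Lemma sum00 (V : zmodType) m n (F : nat -> nat -> V) :
  \sum_(p < m.+1) \sum_(q < n.+1) F p q = F 0%N 0%N +
   \sum_(p < m.+1) \sum_(q < n.+1)
      (if ((p : nat) == 0%N) && ((q : nat) == 0%N) then 0 else F p q).
Proof.
transitivity (\sum_(p < m.+1) \sum_(q < n.+1)
   ((if ((p : nat) == 0%N) && ((q : nat) == 0%N) then F p q else 0) +
    (if ((p : nat) == 0%N) && ((q : nat) == 0%N) then 0 else F p q))).
  apply: eq_bigr => p _; apply: eq_bigr => q _.
  by case: ifP; rewrite ?addr0 ?add0r.
under eq_bigr => p _ do rewrite big_split /=.
rewrite big_split /=; congr (_ + _).
rewrite big_ord_recl /= big_ord_recl /= big1; last by move=> i _.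
by rewrite big1 ?addr0 //; move=> i _; rewrite big1.
Qed.

Lemma geom_bound (R : realType) (r : R) N : 0 <= r -> r <= 1/2 ->
  \sum_(i < N) r ^+ i <= 1 + 2 * r.
Proof.
move=> h0 h1; elim: N => [|N IH]; first by rewrite big_ord0; lra.
rewrite big_ord_recl expr0.
under eq_bigr => i _ do rewrite lift0 exprS.
rewrite -mulr_sumr.
have h2 : r * \sum_(i < N) r ^+ i <= r * (1 + 2 * r) by apply: ler_wpM2l.
nra.
Qed.

Lemma geom_ge1 (R : realType) (r : R) N : 0 <= r -> 1 <= \sum_(i < N.+1) r ^+ i.
Proof.
move=> h0; rewrite big_ord_recl expr0 lerDl.
by apply: sumr_ge0 => i _; apply: exprn_ge0.
Qed.

Lemma scal_bound (R : realType) (C R0 : R) m n : 0 < C -> 0 < R0 ->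
  \sum_(p < m.+1) \sum_(q < n.+1)
    (if ((p : nat) == 0%N) && ((q : nat) == 0%N) then 0
     else C * R0 ^+ (p + q) * (8 * R0 * (C + 1)) ^+ (m + n - (p + q)))
  <= (8 * R0 * (C + 1)) ^+ (m + n).
Proof.
move=> hC hR.
set S := 8 * R0 * (C + 1).
have hS : 0 < S by rewrite /S !mulr_gt0 //; lra.
set r := R0 / S.
have hr0 : 0 <= r by rewrite /r divr_ge0 // ltW.
have hrS : r * (8 * (C + 1)) = 1.
  rewrite /r /S; field; apply/andP; split; apply/negP => /eqP; lra.
have hr1 : r <= 1/2 by nra.
apply: (@le_trans _ _ (S ^+ (m + n) * C *
  \sum_(p < m.+1) \sum_(q < n.+1)
    (if ((p : nat) == 0%N) && ((q : nat) == 0%N) then 0 else r ^+ (p + q)))).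
  rewrite le_eqVlt; apply/orP; left; apply/eqP.
  rewrite mulr_sumr; apply: eq_bigr => p hp; rewrite mulr_sumr; apply: eq_bigr => q hq.
  case: ifP => _; first by rewrite mulr0.
  have hp' : (p <= m)%N by rewrite -ltnS.
  have hq' : (q <= n)%N by rewrite -ltnS.
  have e : (m + n = (p + q) + (m + n - (p + q)))%N by lia.
  have hSd : S ^+ (p + q) != 0 by rewrite expf_neq0 // gt_eqF.
  set d := (p + q)%N in e hSd *; set k := (m + n - d)%N in e *.
  rewrite e exprD /r expr_div_n.
  set Sd := S ^+ d in hSd *.
  by field.
have := sum00 m n (fun p q => r ^+ (p + q)).
rewrite addn0 expr0 => e.
have e2 : \sum_(p < m.+1) \sum_(q < n.+1) r ^+ (p + q) =
   (\sum_(p < m.+1) r ^+ p) * (\sum_(q < n.+1) r ^+ q).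
  rewrite big_distrlr /=; apply: eq_bigr => p _; apply: eq_bigr => q _.
  by rewrite exprD.
have -> : \sum_(p < m.+1) \sum_(q < n.+1)
    (if ((p : nat) == 0%N) && ((q : nat) == 0%N) then 0 else r ^+ (p + q)) =
    (\sum_(p < m.+1) r ^+ p) * (\sum_(q < n.+1) r ^+ q) - 1.
  by rewrite -e2 e addrC addKr.
have g1 := geom_bound (m.+1) hr0 hr1.
have g2 := geom_bound (n.+1) hr0 hr1.
have g1' := geom_ge1 m hr0.
have g2' := geom_ge1 n hr0.
have hSD : 0 < S ^+ (m + n) by apply: exprn_gt0.
have hG : (\sum_(p < m.+1) r ^+ p) * (\sum_(q < n.+1) r ^+ q) <= (1 + 2 * r) * (1 + 2 * r).
  apply: ler_pM; [exact: le_trans ler01 g1' | exact: le_trans ler01 g2' | exact: g1 | exact: g2].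
have hCG : C * ((\sum_(p < m.+1) r ^+ p) * (\sum_(q < n.+1) r ^+ q) - 1) <= 1 by nra.
rewrite -mulrA; rewrite -[X in _ <= X]mulr1.
by apply: ler_wpM2l => //; apply: ltW.
Qed.

Lemma Y_bound (R : realType) (X Y : aseries R) (C R0 : R) :
  0 < C -> 1 < R0 ->
  (forall p q, `|X p q| <= (C * R0 ^+ (p + q) * (q`!)%:R)%:C) ->
  X 0%N 0%N = 1 -> amul X Y = aone R ->
  forall m n, `|Y m n| <= ((8 * R0 * (C + 1)) ^+ (m + n) * (rising m.+1 n)%:R)%:C.
Proof.
move=> hC hR hXb hX hXY.
set S := 8 * R0 * (C + 1).
have hS : 0 <= S by rewrite /S !mulr_ge0 //; lra.
suff H : forall D m n, (m + n)%N = D ->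
    `|Y m n| <= (S ^+ (m + n) * (rising m.+1 n)%:R)%:C by move=> m n; exact: H.
elim/ltn_ind => D IH m n hD.
have e := amul_split X Y m n; rewrite hXY hX mul1r in e.
case: D IH hD => [|D] IH hD.
  have hm : m = 0%N by lia.
  have hn : n = 0%N by lia.
  subst m n.
  move: e; rewrite big_ord1 big_ord1 /= addr0 /aone /= => <-.
  by rewrite normr1 expr0 rising0 mul1r.
have ha : aone R m n = 0.
  rewrite /aone; case: (m =P 0%N) => [hm|//]; case: (n =P 0%N) => [hn|]; last by rewrite andbF.
  by exfalso; lia.
have eY : Y m n = - \sum_(p < m.+1) \sum_(q < n.+1)
      (if ((p : nat) == 0%N) && ((q : nat) == 0%N) then 0 else blk X Y m n p q).
  by apply/eqP; rewrite -addr_eq0 -e ha.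
rewrite eY normrN.
apply: le_trans (ler_norm_sum _ _ _) _.
apply: (@le_trans _ _ (\sum_(p < m.+1) \sum_(q < n.+1)
   ((if ((p : nat) == 0%N) && ((q : nat) == 0%N) then 0
     else C * R0 ^+ (p + q) * S ^+ (m + n - (p + q))) * (rising m.+1 n)%:R)%:C)).
  apply: ler_sum => p hp; apply: le_trans (ler_norm_sum _ _ _) _.
  apply: ler_sum => q hq.
  case: ifP => hpq; first by rewrite normr0 mul0r rmorph0.
  have hp' : (p <= m)%N by rewrite -ltnS.
  have hq' : (q <= n)%N by rewrite -ltnS.
  have hpq' : (0 < p + q)%N.
    by move: hpq; case: (p : nat) => [|?]; case: (q : nat) => [|?].
  apply: blk_bound => //; first lra; first lra.
  move=> a b hab; apply: (IH (a + b)%N) => //; lia.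
under eq_bigr => p _ do rewrite -(rmorph_sum (real_complex R)).
rewrite -(rmorph_sum (real_complex R)) lecR.
under eq_bigr => p _ do rewrite -mulr_suml.
rewrite -mulr_suml ler_wpM2r ?ler0n //.
by apply: scal_bound => //; lra.
Qed.

Lemma bin_le_exp N k : ('C(N, k) <= 2 ^ N)%N.
Proof.
elim: N k => [|N IH] [|k] //.
  by rewrite bin0 expn_gt0.
rewrite binS expnS mul2n -addnn leq_add //.
Qed.

Lemma w_le (R : realType) m n :
  ((rising m.+1 n)%:R : R) <= 2 ^+ (m + n) * (n`!)%:R.
Proof.
rewrite -(bin_rising m n) natrM ler_wpM2r ?ler0n //.
have := bin_le_exp (m + n) n.
by rewrite -(ler_nat R) natrX.
Qed.

Theorem proposition1p1p7 (R : realType) (X : aseries R) :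
  aconv X -> X 0%N 0%N = 1 -> ainvertible_conv X.
Proof.
move=> [R0 [C [h1 [h2 hb]]]] hX.
have [Y hXY] := rinv_exists hX.
exists Y; split; last by split => //; apply: two_sided.
have hY := Y_bound h2 h1 hb hX hXY.
set S := 8 * R0 * (C + 1) in hY.
have hS : 1 <= S by rewrite /S; nra.
exists (2 * S), 1; split; first lra.
split; first lra.
move=> p q; apply: le_trans (hY p q) _.
rewrite lecR mul1r.
have hw := w_le R p q.
have hSp : 0 <= S ^+ (p + q) by apply: exprn_ge0; lra.
apply: le_trans (ler_wpM2l hSp hw) _.
rewrite le_eqVlt; apply/orP; left; apply/eqP.
by rewrite [(2 * S) ^+ _]exprMn mulrA (mulrC (S ^+ (p + q))).
Qed.
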